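(* Let $\alpha,\beta\in C^\infty(\mathbb R)$ and consider $u_t=K:=uu_x+\hbar^2\alpha(u)u_x^3$. Then the formal series $$Q_\beta=\sum_{n=0}^\infty\hbar^{2n}\frac{\alpha(u)^n\beta^{(n)}(u)}{n!}u_x^{2n+1}$$ is a formal symmetry: $K'[Q_\beta]-Q_\beta'[K]=0$ order by order in $\hbar$. Its coefficients $\beta_n$ (with $Q_\beta=\sum\hbar^{2n}\beta_nu_x^{2n+1}$, $\beta_0=\beta$) are the unique solution of $n\beta_n=(1-n)\alpha'\beta_{n-1}+\alpha\beta_{n-1}'$, $n\ge1$, and $Q_\beta$ is the unique formal symmetry $\sum_{n\ge0}\hbar^{2n}Q_{2n+1}$, $Q_{2n+1}\in\mathcal D_{2n+1}$, with $Q_1=\beta(u)u_x$.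
   Context: $u_k=\partial_x^ku$; $\mathcal D=C^\infty(\mathbb R)[u_1,u_2,\dots]$ (coefficients smooth in $u$), graded by $\deg u_k=k$; $\mathcal D_k$ is the span of degree-$k$ monomials. Total derivative $D=\sum_{r\ge0}u_{r+1}\partial/\partial u_r$ ($u_0=u$); Fréchet derivative $P'[V]=\sum_{r\ge0}\frac{\partial P}{\partial u_r}D^rV$, extended coefficientwise to formal series in the formal parameter $\hbar$. A formal symmetry of $u_t=K$ is a formal series $Q$ with $K'[Q]-Q'[K]=0$. $\beta^{(n)}$ is the $n$-th derivative of $\beta$. *)

(* Defs.v *)
From Stdlib Require Import Reals List Arith.
From Coquelicot Require Import Coquelicot.
Import ListNotations.
Open Scope R_scope.

Definition smooth (f : R -> R) : Prop :=
  forall (n : nat) (x : R), ex_derive (Derive_n f n) x.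

(* A jet: j r is the value of u_r (u_0 = u). *)
Definition jet := nat -> R.

(* A term  c(u) * u_1^(e_0) * u_2^(e_1) * ... * u_m^(e_(m-1)). *)
Record term := mkTerm { tc : R -> R ; te : list nat }.

Definition dpoly := list term.

Fixpoint mono_eval (e : list nat) (j : jet) (k : nat) : R :=
  match e with
  | nil => 1
  | a :: e' => (j k) ^ a * mono_eval e' j (S k)
  end.

Definition term_eval (t : term) (j : jet) : R := tc t (j O) * mono_eval (te t) j 1.

Definition dp_eval (P : dpoly) (j : jet) : R :=
  fold_right (fun t acc => term_eval t j + acc) 0 P.

(* Equality of elements of D (the evaluation map is injective on D). *)
Definition dp_eq (P Q : dpoly) : Prop := forall j : jet, dp_eval P j = dp_eval Q j.

Fixpoint mono_deg (e : list nat) (k : nat) : nat :=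
  match e with
  | nil => O
  | a :: e' => (k * a + mono_deg e' (S k))%nat
  end.

Definition dp_smooth (P : dpoly) : Prop := List.Forall (fun t => smooth (tc t)) P.
Definition dp_homog (k : nat) (P : dpoly) : Prop := List.Forall (fun t => mono_deg (te t) 1 = k) P.

Definition dp_opp (P : dpoly) : dpoly := map (fun t => mkTerm (fun x => - tc t x) (te t)) P.
Definition dp_add (P Q : dpoly) : dpoly := P ++ Q.
Definition dp_sub (P Q : dpoly) : dpoly := dp_add P (dp_opp Q).

Fixpoint ladd (a b : list nat) : list nat :=
  match a, b with
  | nil, _ => b
  | _, nil => a
  | x :: a', y :: b' => (x + y)%nat :: ladd a' b'
  end.

Definition tmul (t s : term) : term :=
  mkTerm (fun x => tc t x * tc s x) (ladd (te t) (te s)).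

Definition dp_mul (P Q : dpoly) : dpoly := flat_map (fun t => map (tmul t) Q) P.

Definition dp_var (m : nat) : dpoly :=
  match m with
  | O => [mkTerm (fun x => x) nil]
  | S k => [mkTerm (fun _ => 1) (repeat O k ++ [1%nat])]
  end.

Fixpoint ldec (r : nat) (e : list nat) : list nat :=
  match e, r with
  | nil, _ => nil
  | a :: e', O => Nat.pred a :: e'
  | a :: e', S r' => a :: ldec r' e'
  end.

Definition dpartial (r : nat) (P : dpoly) : dpoly :=
  match r with
  | O => map (fun t => mkTerm (Derive (tc t)) (te t)) P
  | S r' => map (fun t => mkTerm (fun x => INR (nth r' (te t) O) * tc t x) (ldec r' (te t))) P
  end.

Definition nvars (P : dpoly) : nat := fold_right (fun t n => Nat.max (length (te t)) n) O P.

Definition totD (P : dpoly) : dpoly :=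
  concat (map (fun r => dp_mul (dp_var (S r)) (dpartial r P)) (seq O (S (nvars P)))).

Definition totDn (n : nat) (P : dpoly) : dpoly := Nat.iter n totD P.

Definition frechet (P V : dpoly) : dpoly :=
  concat (map (fun r => dp_mul (dpartial r P) (totDn r V)) (seq O (S (nvars P)))).

(* S k is the coefficient of hbar^k. *)
Definition series := nat -> dpoly.

Definition sfrechet (P V : series) (k : nat) : dpoly :=
  concat (map (fun i => frechet (P i) (V (k - i)%nat)) (seq O (S k))).

Definition formal_symmetry (K Q : series) : Prop :=
  forall k : nat, dp_eq (dp_sub (sfrechet K Q k) (sfrechet Q K k)) nil.

Definition Kser (alpha : R -> R) : series :=
  fun k => match k with
           | O => [mkTerm (fun x => x) [1%nat]]
           | 2%nat => [mkTerm alpha [3%nat]]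
           | _ => nil
           end.

Definition beta_n (alpha beta : R -> R) (n : nat) : R -> R :=
  fun x => (alpha x) ^ n * Derive_n beta n x / INR (fact n).

(* Q_beta = sum_n hbar^(2n) beta_n(u) u_x^(2n+1) *)
Definition Qbeta (alpha beta : R -> R) : series :=
  fun k => if Nat.even k then [mkTerm (beta_n alpha beta (Nat.div2 k)) [S k]] else nil.

Definition beta_rec (alpha : R -> R) (b : nat -> R -> R) : Prop :=
  forall (n : nat) (x : R), (1 <= n)%nat ->
    INR n * b n x
    = (1 - INR n) * Derive alpha x * b (Nat.pred n) x + alpha x * Derive (b (Nat.pred n)) x.

(* Main.v *)
Require Import Defs.
From Stdlib Require Import Reals List Arith Lia Lra FunctionalExtensionality.
From Coquelicot Require Import Coquelicot.
Import ListNotations.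
Open Scope R_scope.



Fixpoint sumF (n : nat) (f : nat -> R) : R :=
  match n with O => 0 | S n' => f O + sumF n' (fun i => f (S i)) end.

Lemma sumF_ext n f g : (forall i, (i < n)%nat -> f i = g i) -> sumF n f = sumF n g.
Proof. revert f g; induction n; intros f g H; simpl; auto.
 rewrite (H 0%nat) by lia. f_equal. apply IHn. intros; apply H; lia. Qed.

Lemma sumF_last n f : sumF (S n) f = sumF n f + f n.
Proof. revert f; induction n; intros f. simpl. ring.
  change (sumF (S (S n)) f) with (f O + sumF (S n) (fun i => f (S i))).
  rewrite IHn. simpl. ring. Qed.

Lemma sumF_plus n f g : sumF n (fun i => f i + g i) = sumF n f + sumF n g.
Proof. revert f g; induction n; intros f g; simpl. ring. rewrite IHn. ring. Qed.

Lemma sumF_scal n c f : sumF n (fun i => c * f i) = c * sumF n f.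
Proof. revert f; induction n; intros f; simpl. ring. rewrite IHn. ring. Qed.

Lemma sumF_zero n f : (forall i, (i < n)%nat -> f i = 0) -> sumF n f = 0.
Proof. intros H. rewrite (sumF_ext n f (fun _ => 0)) by auto. clear.
 induction n; simpl; auto. rewrite IHn; ring. Qed.

Lemma sumF_extend n m f : (n <= m)%nat -> (forall i, (n <= i < m)%nat -> f i = 0) -> sumF m f = sumF n f.
Proof. intros Hnm H. induction m. assert (n = 0%nat) by lia. subst; auto.
 destruct (Nat.eq_dec n (S m)). subst; auto.
 rewrite sumF_last, IHm by (try lia; intros; apply H; lia). rewrite H by lia. ring. Qed.

Lemma sumF_delta n p f : (p < n)%nat -> sumF n (fun i => if Nat.eqb p i then f i else 0) = f p.
Proof. revert p f; induction n; intros p f Hp. lia. simpl. destruct p.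
 - simpl. rewrite sumF_zero. ring. intros; reflexivity.
 - simpl. rewrite (IHn p (fun i => f (S i))) by lia. ring. Qed.

Lemma sumF_sub n f g : sumF n (fun i => f i - g i) = sumF n f - sumF n g.
Proof. revert f g; induction n; intros f g; simpl. ring. rewrite IHn. ring. Qed.

Lemma dp_eval_app P Q j : dp_eval (P ++ Q) j = dp_eval P j + dp_eval Q j.
Proof. induction P; simpl. ring. rewrite IHP. ring. Qed.

Lemma dp_eval_concat_seq g k n j :
  dp_eval (concat (map g (seq k n))) j = sumF n (fun i => dp_eval (g (k + i)%nat) j).
Proof. revert k; induction n; intros k; simpl. reflexivity.
 rewrite dp_eval_app, IHn. rewrite Nat.add_0_r. f_equal. apply sumF_ext; intros.
 replace (k + S i)%nat with (S k + i)%nat by lia. reflexivity. Qed.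

Lemma mono_eval_ladd a b j k : mono_eval (ladd a b) j k = mono_eval a j k * mono_eval b j k.
Proof. revert b k; induction a; intros b k; destruct b; simpl; try ring.
 rewrite IHa, pow_add. ring. Qed.

Lemma term_eval_tmul t s j : term_eval (tmul t s) j = term_eval t j * term_eval s j.
Proof. unfold term_eval, tmul; simpl. rewrite mono_eval_ladd. ring. Qed.

Lemma dp_eval_map_tmul t Q j : dp_eval (map (tmul t) Q) j = term_eval t j * dp_eval Q j.
Proof. induction Q; simpl. ring. rewrite IHQ, term_eval_tmul. ring. Qed.

Lemma dp_eval_mul P Q j : dp_eval (dp_mul P Q) j = dp_eval P j * dp_eval Q j.
Proof. unfold dp_mul. induction P; simpl. ring. rewrite dp_eval_app, dp_eval_map_tmul, IHP. ring. Qed.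

Lemma dp_eval_opp P j : dp_eval (dp_opp P) j = - dp_eval P j.
Proof. induction P; simpl. ring. rewrite IHP. unfold term_eval; simpl. ring. Qed.

Lemma dp_eval_sub P Q j : dp_eval (dp_sub P Q) j = dp_eval P j - dp_eval Q j.
Proof. unfold dp_sub, dp_add. rewrite dp_eval_app, dp_eval_opp. ring. Qed.

Lemma mono_var r j k : mono_eval (repeat 0%nat r ++ [1%nat]) j k = j (k + r)%nat.
Proof. revert k; induction r; intros k; simpl. rewrite Nat.add_0_r. ring.
 rewrite IHr. replace (k + S r)%nat with (S k + r)%nat by lia. ring. Qed.

Lemma dp_eval_var r j : dp_eval (dp_var (S r)) j = j (S r).
Proof. simpl. unfold term_eval; simpl. rewrite mono_var. simpl. ring. Qed.

Definition pd (r : nat) (t : term) (j : jet) : R :=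
  INR (nth r (te t) 0%nat) * tc t (j 0%nat) * mono_eval (ldec r (te t)) j 1.

Lemma dp_eval_dpartial_S r P j :
  dp_eval (dpartial (S r) P) j = fold_right (fun t acc => pd r t j + acc) 0 P.
Proof. induction P; simpl. reflexivity. rewrite <- IHP. unfold term_eval, pd; simpl. ring. Qed.

Lemma dp_eval_dpartial_0 P j :
  dp_eval (dpartial 0 P) j = fold_right (fun t acc => Derive (tc t) (j 0%nat) * mono_eval (te t) j 1 + acc) 0 P.
Proof. induction P; simpl. reflexivity. rewrite <- IHP. reflexivity. Qed.

Lemma dpartial_beyond r P j : (nvars P <= r)%nat -> dp_eval (dpartial (S r) P) j = 0.
Proof. rewrite dp_eval_dpartial_S. induction P; simpl; intros H. reflexivity.
 rewrite IHP by lia. unfold pd. rewrite nth_overflow by lia. simpl. ring. Qed.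

Lemma totD_eval V j :
  dp_eval (totD V) j = sumF (S (nvars V)) (fun i => j (S i) * dp_eval (dpartial i V) j).
Proof. unfold totD. rewrite dp_eval_concat_seq. apply sumF_ext; intros i _.
 simpl (0 + i)%nat. rewrite dp_eval_mul, dp_eval_var. reflexivity. Qed.

Lemma frechet_eval P V j :
  dp_eval (frechet P V) j = sumF (S (nvars P)) (fun r => dp_eval (dpartial r P) j * dp_eval (totDn r V) j).
Proof. unfold frechet. rewrite dp_eval_concat_seq. apply sumF_ext; intros i _.
 simpl (0 + i)%nat. rewrite dp_eval_mul. reflexivity. Qed.



Lemma isd_const a x : is_derive (fun _ : R => a) x 0.
Proof. exact (is_derive_const a x). Qed.
Lemma isd_plus f g x a b : is_derive f x a -> is_derive g x b -> is_derive (fun y => f y + g y) x (a + b).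
Proof. intros. exact (is_derive_plus f g x a b H H0). Qed.
Lemma isd_scal f x c a : is_derive f x a -> is_derive (fun y => c * f y) x (c * a).
Proof. intros. apply is_derive_scal; auto. Qed.
Lemma isd_mult f g x a b : is_derive f x a -> is_derive g x b -> is_derive (fun y => f y * g y) x (a * g x + f x * b).
Proof. intros. exact (is_derive_mult f g x a b H H0 Rmult_comm). Qed.
Lemma isd_id x : is_derive (fun y : R => y) x 1.
Proof. exact (is_derive_id x). Qed.

Definition upd (j : jet) (i : nat) (y : R) : jet := fun k => if Nat.eqb k i then y else j k.

Lemma upd_same j i : upd j i (j i) = j.
Proof. apply functional_extensionality; intros k. unfold upd. destruct (Nat.eqb_spec k i); subst; auto. Qed.

Lemma mono_upd_out e j i y k : (i < k)%nat -> mono_eval e (upd j i y) k = mono_eval e j k.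
Proof. revert k; induction e; intros k H; simpl. reflexivity.
 rewrite IHe by lia. unfold upd. destruct (Nat.eqb_spec k i). lia. reflexivity. Qed.

Lemma isd_eq (f : R -> R) (x a b : R) : is_derive f x a -> a = b -> is_derive f x b.
Proof. intros H ->; exact H. Qed.

Lemma isd_pow_id a x : is_derive (fun y => y ^ a) x (INR a * x ^ Init.Nat.pred a).
Proof. eapply isd_eq. apply (is_derive_pow (fun y => y) a x 1 (isd_id x)). ring. Qed.

Lemma mono_deriv e j k r :
  is_derive (fun y => mono_eval e (upd j (k + r) y) k) (j (k + r)%nat)
            (INR (nth r e 0%nat) * mono_eval (ldec r e) j k).
Proof. revert k r; induction e as [|a e IH]; intros k r.
 - apply (isd_eq _ _ 0). apply (isd_const 1). destruct r; cbn; ring.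
 - destruct r.
   + rewrite Nat.add_0_r.
     apply (is_derive_ext (fun y => y ^ a * mono_eval e j (S k))).
     { intros y. cbn [mono_eval]. rewrite mono_upd_out by lia. unfold upd. rewrite Nat.eqb_refl. reflexivity. }
     idtac "A".
     apply (isd_eq _ _ _ _ (isd_mult _ _ _ _ _ (isd_pow_id a (j k)) (isd_const (mono_eval e j (S k)) (j k)))).
     idtac "B".
     cbn [nth ldec mono_eval]. ring.
   + replace (k + S r)%nat with (S k + r)%nat by lia.
     apply (is_derive_ext (fun y => j k ^ a * mono_eval e (upd j (S k + r) y) (S k))).
     { intros y. cbn [mono_eval]. unfold upd at 2. destruct (Nat.eqb_spec k (S k + r)). lia. reflexivity. }
     idtac "C".
     apply (isd_eq _ _ _ _ (isd_scal _ _ (j k ^ a) _ (IH (S k) r))). cbn [nth ldec mono_eval]. ring.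
Qed.
Lemma term_deriv_S t j r :
  is_derive (fun y => term_eval t (upd j (S r) y)) (j (S r)) (pd r t j).
Proof. unfold term_eval, pd.
 apply (is_derive_ext (fun y => tc t (j 0%nat) * mono_eval (te t) (upd j (1 + r) y) 1)).
 { intros y. reflexivity. }
 apply (isd_eq _ _ _ _ (isd_scal _ _ (tc t (j 0%nat)) _ (mono_deriv (te t) j 1 r))). simpl. ring. Qed.

Lemma term_deriv_0 t j : ex_derive (tc t) (j 0%nat) ->
  is_derive (fun y => term_eval t (upd j 0 y)) (j 0%nat) (Derive (tc t) (j 0%nat) * mono_eval (te t) j 1).
Proof. intros H. unfold term_eval.
 apply (is_derive_ext (fun y => tc t y * mono_eval (te t) j 1)).
 { intros y. rewrite mono_upd_out by lia. reflexivity. }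
 apply (isd_eq _ _ _ _ (isd_mult _ _ _ _ _ (Derive_correct _ _ H) (isd_const (mono_eval (te t) j 1) (j 0%nat)))). ring. Qed.

Definition diffc (P : dpoly) : Prop := List.Forall (fun t => forall x, ex_derive (tc t) x) P.

Lemma dp_deriv P j r : (r = 0%nat -> diffc P) ->
  is_derive (fun y => dp_eval P (upd j r y)) (j r) (dp_eval (dpartial r P) j).
Proof. intros Hd. destruct r.
 - specialize (Hd eq_refl). rewrite dp_eval_dpartial_0. induction P as [|t P IH]; simpl.
   + apply isd_const.
   + inversion Hd; subst. apply isd_plus. apply term_deriv_0; auto. apply IH; auto.
 - rewrite dp_eval_dpartial_S. clear Hd. induction P as [|t P IH]; simpl.
   + apply isd_const.
   + apply isd_plus. apply term_deriv_S. apply IH.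
Qed.

Definition sd (r : nat) (F : jet -> R) (j : jet) : R := Derive (fun y => F (upd j r y)) (j r).

Lemma dpartial_sd P j r : (r = 0%nat -> diffc P) -> dp_eval (dpartial r P) j = sd r (dp_eval P) j.
Proof. intros Hd. unfold sd. symmetry. apply is_derive_unique. apply dp_deriv; auto. Qed.

Lemma sd_ext r F G j : (forall j', F j' = G j') -> sd r F j = sd r G j.
Proof. intros H. unfold sd. apply Derive_ext. intros; apply H. Qed.

Lemma totD_sd V j N : diffc V -> (nvars V <= N)%nat ->
  dp_eval (totD V) j = sumF (S N) (fun i => j (S i) * sd i (dp_eval V) j).
Proof. intros Hd HN. rewrite totD_eval. rewrite (sumF_extend (S (nvars V)) (S N)).
 2: lia. 2: { intros i Hi; destruct i. lia. cbv beta. rewrite <- dpartial_sd by (intros; discriminate). rewrite dpartial_beyond by lia; ring. }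
 apply sumF_ext; intros i _. rewrite dpartial_sd; auto. Qed.

Lemma frechet_sd P V j N : diffc P -> (nvars P <= N)%nat ->
  dp_eval (frechet P V) j = sumF (S N) (fun r => sd r (dp_eval P) j * dp_eval (totDn r V) j).
Proof. intros Hd HN. rewrite frechet_eval. rewrite (sumF_extend (S (nvars P)) (S N)).
 2: lia. 2: { intros i Hi; destruct i. lia. cbv beta. rewrite <- dpartial_sd by (intros; discriminate). rewrite dpartial_beyond by lia; ring. }
 apply sumF_ext; intros i _. rewrite dpartial_sd; auto. Qed.

Lemma totD_compat V V' : diffc V -> diffc V' -> dp_eq V V' -> dp_eq (totD V) (totD V').
Proof. intros H1 H2 E j. rewrite (totD_sd V j (Nat.max (nvars V) (nvars V'))), (totD_sd V' j (Nat.max (nvars V) (nvars V'))) by (auto; lia).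
 apply sumF_ext; intros. f_equal. apply sd_ext. auto. Qed.

Lemma frechet_compat_l P P' V : diffc P -> diffc P' -> dp_eq P P' -> dp_eq (frechet P V) (frechet P' V).
Proof. intros H1 H2 E j. rewrite (frechet_sd P V j (Nat.max (nvars P) (nvars P'))), (frechet_sd P' V j (Nat.max (nvars P) (nvars P'))) by (auto; lia).
 apply sumF_ext; intros. f_equal. apply sd_ext. auto. Qed.

Lemma frechet_compat_r P V V' : (nvars P <= 1)%nat -> diffc V -> diffc V' -> dp_eq V V' -> dp_eq (frechet P V) (frechet P V').
Proof. intros HP H1 H2 E j. rewrite !frechet_eval.
 apply sumF_ext; intros r Hr. destruct r as [|[|r]].
 - simpl. rewrite E. reflexivity.
 - simpl. rewrite (totD_compat V V' H1 H2 E j). reflexivity.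
 - lia.
Qed.



Fixpoint Fsum (r : nat) (f : nat -> nat -> R) : R :=
  match r with O => f O 1%nat | S r' => Fsum r' (fun p q => f (S p) q + f p (S q)) end.

Lemma Fsum_ext r f g : (forall p q, f p q = g p q) -> Fsum r f = Fsum r g.
Proof. revert f g; induction r; intros f g H; simpl; auto. apply IHr; intros; rewrite !H; auto. Qed.

Lemma Fsum_ext_deg r f g : (forall p q, (p + q = S r)%nat -> f p q = g p q) -> Fsum r f = Fsum r g.
Proof. revert f g; induction r; intros f g H; simpl. apply H; lia.
 apply IHr; intros p q Hpq. rewrite (H (S p) q), (H p (S q)) by lia. reflexivity. Qed.

Lemma Fsum_plus r f g : Fsum r (fun p q => f p q + g p q) = Fsum r f + Fsum r g.
Proof. revert f g; induction r; intros f g; simpl. reflexivity. rewrite <- IHr. apply Fsum_ext; intros; ring. Qed.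

Lemma Fsum_scal r c f : Fsum r (fun p q => c * f p q) = c * Fsum r f.
Proof. revert f; induction r; intros f; simpl. reflexivity. rewrite <- IHr. apply Fsum_ext; intros; ring. Qed.

Lemma Fsum_zero r : Fsum r (fun _ _ => 0) = 0.
Proof. rewrite (Fsum_ext r (fun _ _ => 0) (fun p q => 0 * 0)) by (intros; ring). rewrite Fsum_scal. ring. Qed.

Lemma Fsum_sumF r n h : Fsum r (fun p q => sumF n (fun i => h i p q)) = sumF n (fun i => Fsum r (h i)).
Proof. revert h; induction n; intros h; simpl. apply Fsum_zero.
 rewrite Fsum_plus. rewrite IHn. reflexivity. Qed.

Lemma Fsum_deriv r (f : nat -> nat -> R -> R) (df : nat -> nat -> R) x :
  (forall p q, is_derive (f p q) x (df p q)) ->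
  is_derive (fun y => Fsum r (fun p q => f p q y)) x (Fsum r df).
Proof. revert f df; induction r; intros f df H. simpl. apply H.
 apply (IHr (fun p q y => f (S p) q y + f p (S q) y) (fun p q => df (S p) q + df p (S q))).
 intros; apply isd_plus; apply H. Qed.

Lemma Fsum_c0 r g : Fsum r (fun p q => if Nat.eqb p 0 then g q else 0) = g (S r).
Proof. revert g; induction r; intros g; simpl. reflexivity.
 transitivity (Fsum r (fun p q => if Nat.eqb p 0 then g (S q) else 0)).
 apply Fsum_ext; intros; simpl; ring. apply IHr. Qed.

Lemma Fsum_c1 r g : Fsum r (fun p q => if Nat.eqb p 1 then g q else 0) = INR r * g r.
Proof. revert g; induction r; intros g. simpl; ring.
 rewrite S_INR. cbn [Fsum].
 transitivity (Fsum r (fun p q => (if Nat.eqb p 0 then g q else 0) + (if Nat.eqb p 1 then g (S q) else 0))).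
 apply Fsum_ext; intros; reflexivity.
 rewrite Fsum_plus, Fsum_c0, IHr. ring. Qed.

Lemma Fsum_cq0 r g : Fsum r (fun p q => if Nat.eqb q 0 then g p else 0) = 0.
Proof. revert g; induction r; intros g; simpl. reflexivity.
 transitivity (Fsum r (fun p q => if Nat.eqb q 0 then g (S p) else 0)).
 apply Fsum_ext; intros; simpl; ring. apply IHr. Qed.

Lemma Fsum_cq1 r g : Fsum r (fun p q => if Nat.eqb q 1 then g p else 0) = g r.
Proof. revert g; induction r; intros g; simpl. reflexivity.
 transitivity (Fsum r (fun p q => (if Nat.eqb q 1 then g (S p) else 0) + (if Nat.eqb q 0 then g p else 0))).
 apply Fsum_ext; intros; reflexivity.
 rewrite Fsum_plus, Fsum_cq0, IHr. ring. Qed.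

Definition Bf (r : nat) (j : jet) : R := Fsum r (fun p q => j p * j q).

Definition affc (P : dpoly) : Prop := List.Forall (fun t => exists a b, forall x, tc t x = a * x + b) P.

Lemma affine_deriv a b x : is_derive (fun y => a * y + b) x a.
Proof. apply (isd_eq _ _ _ _ (isd_plus _ _ _ _ _ (isd_scal _ _ a _ (isd_id x)) (isd_const b x))). ring. Qed.

Lemma affc_diffc P : affc P -> diffc P.
Proof. apply Forall_impl. intros t [a [b H]] x. exists a.
 apply (is_derive_ext (fun y => a * y + b)). intros; rewrite H; auto. apply affine_deriv. Qed.

Lemma affc_concat_map (g : nat -> dpoly) l : (forall r, affc (g r)) -> affc (concat (map g l)).
Proof. intros H. induction l; simpl. constructor. apply Forall_app; split; [apply H | exact IHl]. Qed.

Lemma affc_dpartial r V : affc V -> affc (dpartial r V).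
Proof. intros H. destruct r; simpl; apply Forall_map; revert H; apply Forall_impl; intros t [a [b Hab]].
 - exists 0, a. intros x. simpl. rewrite Rmult_0_l, Rplus_0_l.
   apply is_derive_unique. apply (is_derive_ext (fun y => a * y + b)). intros; rewrite Hab; auto. apply affine_deriv.
 - exists (INR (nth r (te t) 0%nat) * a), (INR (nth r (te t) 0%nat) * b). intros x. simpl. rewrite Hab. ring.
Qed.

Lemma affc_totD V : affc V -> affc (totD V).
Proof. intros H. unfold totD. apply affc_concat_map. intros r.
 simpl. rewrite app_nil_r. apply Forall_map. generalize (affc_dpartial r V H). apply Forall_impl.
 intros t [a [b Hab]]. exists a, b. intros x. simpl. rewrite Hab. ring. Qed.

Definition K0 : dpoly := [mkTerm (fun x => x) [1%nat]].

Lemma affc_totDn_K0 r : affc (totDn r K0).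
Proof. induction r. unfold K0; simpl. constructor; [|constructor]. exists 1, 0. intros; simpl; ring.
 change (totDn (S r) K0) with (totD (totDn r K0)). apply affc_totD; auto. Qed.

Definition dl (p i : nat) : R := if Nat.eqb p i then 1 else 0.

Lemma upd_deriv j i p : is_derive (fun y => upd j i y p) (j i) (dl p i).
Proof. unfold upd, dl. destruct (Nat.eqb p i). apply isd_id. apply isd_const. Qed.

Lemma sd_Bf r i j : sd i (Bf r) j = Fsum r (fun p q => dl p i * j q + j p * dl q i).
Proof. unfold sd, Bf. apply is_derive_unique.
 apply (Fsum_deriv r (fun p q y => upd j i y p * upd j i y q)). intros p q.
 apply (isd_eq _ _ _ _ (isd_mult _ _ _ _ _ (upd_deriv j i p) (upd_deriv j i q))).
 rewrite upd_same. ring. Qed.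

Lemma totDn_K0 r j : dp_eval (totDn r K0) j = Bf r j.
Proof. revert j; induction r; intros j.
 - unfold K0, Bf; simpl. unfold term_eval; simpl. ring.
 - change (totDn (S r) K0) with (totD (totDn r K0)).
   rewrite (totD_sd _ j (Nat.max (nvars (totDn r K0)) (S r))).
   2: apply affc_diffc, affc_totDn_K0. 2: lia.
   rewrite (sumF_ext _ _ (fun i => Fsum r (fun p q => j (S i) * (dl p i * j q + j p * dl q i)))).
   2: { intros i _. rewrite (sd_ext i _ (Bf r)) by auto. rewrite sd_Bf, Fsum_scal. reflexivity. }
   rewrite <- Fsum_sumF. unfold Bf. simpl Fsum at 2. apply Fsum_ext_deg. intros p q Hpq.
   rewrite (sumF_ext _ _ (fun i => (if Nat.eqb p i then j (S i) * j q else 0) + (if Nat.eqb q i then j p * j (S i) else 0))).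
   2: { intros i _. unfold dl. destruct (Nat.eqb p i), (Nat.eqb q i); ring. }
   rewrite sumF_plus, !sumF_delta by lia.
   destruct (Nat.eqb_spec p p); [|congruence]. destruct (Nat.eqb_spec q q); [|congruence]. reflexivity.
Qed.



Definition Bp (r : nat) (j : jet) : R := Bf r j - j 0%nat * j (S r).

Definition LstN (N : nat) (V : dpoly) (j : jet) : R :=
  j 1%nat * dp_eval V j - sumF N (fun r => dp_eval (dpartial (S r) V) j * Bp (S r) j).

Lemma Bf0 j : Bf 0 j = j 0%nat * j 1%nat.
Proof. reflexivity. Qed.

Lemma Lst_frechet V j : dp_eval (frechet K0 V) j - dp_eval (frechet V K0) j = LstN (nvars V) V j.
Proof. rewrite !frechet_eval. unfold LstN.
 change (nvars K0) with 1%nat.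
 rewrite (sumF_ext (S (nvars V)) _ (fun r => dp_eval (dpartial r V) j * Bf r j)) by (intros; rewrite totDn_K0; reflexivity).
 cbn [sumF]. change (totDn 0 V) with V. change (totDn 1 V) with (totD V).
 rewrite totD_eval. cbn [sumF].
 assert (E0 : dp_eval (dpartial 0 K0) j = j 1%nat).
 { simpl. unfold term_eval; simpl. rewrite (is_derive_unique _ _ _ (isd_id (j 0%nat))). ring. }
 assert (E1 : dp_eval (dpartial 1 K0) j = j 0%nat).
 { simpl. unfold term_eval; simpl. ring. }
 rewrite E0, E1, Bf0.
 rewrite (sumF_ext _ (fun r => dp_eval (dpartial (S r) V) j * Bp (S r) j)
   (fun i => dp_eval (dpartial (S i) V) j * Bf (S i) j - j 0%nat * (j (S (S i)) * dp_eval (dpartial (S i) V) j)))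
   by (intros; unfold Bp; ring).
 rewrite sumF_sub, sumF_scal. ring. Qed.

Lemma LstN_extend N V j : (nvars V <= N)%nat -> LstN N V j = LstN (nvars V) V j.
Proof. intros H. unfold LstN. f_equal. apply sumF_extend. lia.
 intros i Hi. rewrite dpartial_beyond by lia. ring. Qed.

Lemma dpS_app r A B j : dp_eval (dpartial (S r) (A ++ B)) j = dp_eval (dpartial (S r) A) j + dp_eval (dpartial (S r) B) j.
Proof. unfold dpartial. rewrite map_app, dp_eval_app. reflexivity. Qed.

Lemma dpS_opp r B j : dp_eval (dpartial (S r) (dp_opp B)) j = - dp_eval (dpartial (S r) B) j.
Proof. rewrite !dp_eval_dpartial_S. induction B; simpl. ring. rewrite IHB. unfold pd; simpl. ring. Qed.

Lemma LstN_sub N A B j : LstN N (dp_sub A B) j = LstN N A j - LstN N B j.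
Proof. unfold LstN, dp_sub, dp_add. rewrite dp_eval_app, dp_eval_opp.
 rewrite (sumF_ext _ _ (fun r => dp_eval (dpartial (S r) A) j * Bp (S r) j - dp_eval (dpartial (S r) B) j * Bp (S r) j))
  by (intros; rewrite dpS_app, dpS_opp; ring).
 rewrite sumF_sub. ring. Qed.

Lemma nvars_app A B : nvars (A ++ B) = Nat.max (nvars A) (nvars B).
Proof. induction A; simpl. reflexivity. rewrite IHA. lia. Qed.

Lemma nvars_opp B : nvars (dp_opp B) = nvars B.
Proof. induction B; simpl. reflexivity. rewrite IHB. reflexivity. Qed.

Lemma nvars_sub A B : nvars (dp_sub A B) = Nat.max (nvars A) (nvars B).
Proof. unfold dp_sub, dp_add. rewrite nvars_app, nvars_opp. reflexivity. Qed.

Definition gr (e : list nat) : nat := match e with [] => 0%nat | _ :: e' => list_sum e' end.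
Definition tau (mu : R) (j : jet) : jet := fun p => if Nat.ltb p 2 then j p else mu * j p.

Lemma mono_tau_k e mu j k : (2 <= k)%nat -> mono_eval e (tau mu j) k = mu ^ (list_sum e) * mono_eval e j k.
Proof. revert k; induction e; intros k Hk; simpl. ring.
 rewrite IHe by lia. unfold tau. destruct (Nat.ltb_spec k 2). lia.
 rewrite pow_add, Rpow_mult_distr. ring. Qed.

Lemma mono_tau1 e mu j : mono_eval e (tau mu j) 1 = mu ^ (gr e) * mono_eval e j 1.
Proof. destruct e; simpl. ring. rewrite mono_tau_k by lia. unfold tau at 1. simpl. ring. Qed.

Lemma term_tau t mu j : term_eval t (tau mu j) = mu ^ (gr (te t)) * term_eval t j.
Proof. unfold term_eval. rewrite mono_tau1. unfold tau at 1. simpl. ring. Qed.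

Lemma pd0_tau t mu j : pd 0 t (tau mu j) = mu ^ (gr (te t)) * pd 0 t j.
Proof. unfold pd. rewrite mono_tau1. unfold tau at 1. simpl.
 destruct (te t); simpl; ring. Qed.

Lemma sum_ldec r l : nth r l 0%nat <> 0%nat -> S (list_sum (ldec r l)) = list_sum l.
Proof. revert r; induction l; intros r H; destruct r; simpl in *; try lia.
 specialize (IHl r H). lia. Qed.

Lemma pdS_tau r t mu j : (1 <= r)%nat -> mu * pd r t (tau mu j) = mu ^ (gr (te t)) * pd r t j.
Proof. intros Hr. unfold pd. destruct (Nat.eq_dec (nth r (te t) 0%nat) 0) as [E|E].
 - rewrite E. simpl. ring.
 - rewrite mono_tau1. unfold tau at 1. simpl.
   destruct (te t) as [|a e]. destruct r; simpl in E; lia.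
   destruct r. lia. simpl. simpl in E. rewrite <- (sum_ldec r e E). simpl. ring. Qed.

Lemma E0_mono e j k r : j (k + r)%nat * (INR (nth r e 0%nat) * mono_eval (ldec r e) j k) = INR (nth r e 0%nat) * mono_eval e j k.
Proof. revert k r; induction e; intros k r. destruct r; simpl; ring.
 destruct r. 
 - rewrite Nat.add_0_r. simpl. destruct a. simpl; ring. simpl. ring.
 - replace (k + S r)%nat with (S k + r)%nat by lia. simpl.
   transitivity (j k ^ a * (j (S k + r)%nat * (INR (nth r e 0%nat) * mono_eval (ldec r e) j (S k)))).
   simpl; ring. rewrite IHe. ring. Qed.

Lemma E0 r t j : j (S r) * pd r t j = INR (nth r (te t) 0%nat) * term_eval t j.
Proof. unfold pd, term_eval.
 transitivity (tc t (j 0%nat) * (j (1 + r)%nat * (INR (nth r (te t) 0%nat) * mono_eval (ldec r (te t)) j 1))).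
 simpl; ring. rewrite E0_mono. ring. Qed.

Lemma E1_num e k N : (length e <= N)%nat -> sumF N (fun i => INR (k + i) * INR (nth i e 0%nat)) = INR (mono_deg e k).
Proof. revert k N; induction e; intros k N H; simpl.
 - apply sumF_zero. intros i _. destruct i; simpl; ring.
 - destruct N. simpl in H; lia. simpl. rewrite Nat.add_0_r.
   rewrite (sumF_ext _ _ (fun i => INR (S k + i) * INR (nth i e 0%nat))) by (intros; f_equal; f_equal; lia).
   rewrite IHe by (simpl in H; lia). rewrite plus_INR, mult_INR. ring. Qed.

Lemma sum_nth_num l N : (length l <= N)%nat -> sumF N (fun i => INR (nth i l 0%nat)) = INR (list_sum l).
Proof. revert N; induction l; intros N H; simpl.
 - apply sumF_zero. intros i _. destruct i; simpl; ring.
 - destruct N. simpl in H; lia. simpl. rewrite IHl by (simpl in H; lia). rewrite plus_INR. ring. Qed.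

Lemma E2_num e N : (length e <= N)%nat -> sumF N (fun i => if Nat.eqb i 0 then 0 else INR (nth i e 0%nat)) = INR (gr e).
Proof. intros H. destruct e; simpl.
 - apply sumF_zero. intros i _. destruct i; simpl; ring.
 - destruct N. simpl in H; lia. simpl. rewrite sum_nth_num by (simpl in H; lia). ring. Qed.

Lemma Bp_Fsum r j : Bp r j = Fsum r (fun p q => if Nat.eqb p 0 then 0 else j p * j q).
Proof. unfold Bp, Bf.
 rewrite (Fsum_ext r _ (fun p q => (if Nat.eqb p 0 then j 0%nat * j q else 0) + (if Nat.eqb p 0 then 0 else j p * j q))).
 2: { intros p q. destruct (Nat.eqb_spec p 0). subst; ring. ring. }
 rewrite Fsum_plus, (Fsum_c0 r (fun q => j 0%nat * j q)). ring. Qed.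

Definition W (r : nat) (j : jet) : R := Fsum r (fun p q => if andb (Nat.leb 2 p) (Nat.leb 2 q) then j p * j q else 0).

Lemma Bp_tau r mu j : Bp r (tau mu j) = INR r * (j 1%nat * tau mu j r) + (if Nat.leb 2 r then mu * j r * j 1%nat else 0) + mu ^ 2 * W r j.
Proof. rewrite Bp_Fsum.
 rewrite (Fsum_ext r _ (fun p q => (if Nat.eqb p 1 then j 1%nat * tau mu j q else 0)
    + (if Nat.eqb q 1 then (if Nat.leb 2 p then mu * j p * j 1%nat else 0) else 0)
    + mu ^ 2 * (if andb (Nat.leb 2 p) (Nat.leb 2 q) then j p * j q else 0)
    + (if Nat.eqb q 0 then (if Nat.leb 2 p then tau mu j p * j 0%nat else 0) else 0))).
 2: { intros p q. destruct p as [|[|p]]; destruct q as [|[|q]]; unfold tau; simpl; ring. }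
 rewrite !Fsum_plus, Fsum_scal, Fsum_c1, Fsum_cq0.
 rewrite (Fsum_cq1 r (fun p => if Nat.leb 2 p then mu * j p * j 1%nat else 0)). unfold W. ring. Qed.

Lemma Bp1_tau mu j : Bp 1 (tau mu j) = j 1%nat * j 1%nat + mu ^ 2 * W 1 j.
Proof. rewrite Bp_tau. unfold tau. simpl. ring. Qed.

Lemma BpS_tau r mu j : (2 <= r)%nat -> Bp r (tau mu j) = mu * ((INR r + 1) * j 1%nat * j r + mu * W r j).
Proof. intros H. rewrite Bp_tau. unfold tau at 1. destruct (Nat.ltb_spec r 2). lia.
 destruct (Nat.leb_spec 2 r). 2: lia. ring. Qed.



Definition ta (d : nat) (t : term) (j : jet) : R := j 1%nat * (1 - INR d - INR (gr (te t))) * term_eval t j.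
Definition tb (N : nat) (t : term) (j : jet) : R := - sumF N (fun r => if Nat.eqb r 0 then 0 else pd r t j * W (S r) j).
Definition tcc (t : term) (j : jet) : R := - pd 0 t j * W 1 j.

Lemma tau1 mu j : tau mu j 1%nat = j 1%nat.
Proof. reflexivity. Qed.

Lemma Lst_term_tau t d N mu j : (length (te t) <= N)%nat -> (1 <= N)%nat -> mono_deg (te t) 1 = d ->
  LstN N [t] (tau mu j) = mu ^ (gr (te t)) * (ta d t j + mu * tb N t j + mu ^ 2 * tcc t j).
Proof. intros HN H1 Hd. unfold LstN, ta, tb, tcc.
 rewrite (sumF_ext N _ (fun r => pd r t (tau mu j) * Bp (S r) (tau mu j))).
 2: { intros r _. rewrite dp_eval_dpartial_S. simpl. ring. }
 replace (dp_eval [t] (tau mu j)) with (term_eval t (tau mu j)) by (simpl; ring).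
 destruct N as [|N']. lia. cbn [sumF]. simpl (Nat.eqb 0 0).
 rewrite Bp1_tau, pd0_tau, term_tau, tau1.
 set (s := gr (te t)). set (T := term_eval t j). set (p0 := pd 0 t j).
 set (S1 := sumF N' (fun i => INR (S (S i)) * (j (S (S i)) * pd (S i) t j))).
 set (S2 := sumF N' (fun i => j (S (S i)) * pd (S i) t j)).
 set (S3 := sumF N' (fun i => pd (S i) t j * W (S (S i)) j)).
 assert (HS : sumF N' (fun i => pd (S i) t (tau mu j) * Bp (S (S i)) (tau mu j)) = mu ^ s * (j 1%nat * S1 + j 1%nat * S2 + mu * S3)).
 { transitivity (sumF N' (fun i => mu ^ s * (j 1%nat * (INR (S (S i)) * (j (S (S i)) * pd (S i) t j)) + j 1%nat * (j (S (S i)) * pd (S i) t j) + mu * (pd (S i) t j * W (S (S i)) j)))).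
   - apply sumF_ext. intros i _. rewrite BpS_tau by lia.
     transitivity ((mu * pd (S i) t (tau mu j)) * ((INR (S (S i)) + 1) * j 1%nat * j (S (S i)) + mu * W (S (S i)) j)). ring.
     rewrite pdS_tau by lia. fold s. ring.
   - rewrite sumF_scal, !sumF_plus, !sumF_scal. reflexivity. }
 rewrite HS.
 assert (HE1 : sumF (S N') (fun i => INR (1 + i) * INR (nth i (te t) 0%nat)) = INR d).
 { rewrite E1_num by lia. rewrite Hd. reflexivity. }
 cbn [sumF] in HE1.
 assert (HE2 : sumF (S N') (fun i => if Nat.eqb i 0 then 0 else INR (nth i (te t) 0%nat)) = INR s).
 { apply E2_num. lia. }
 cbn [sumF] in HE2. simpl (Nat.eqb 0 0) in HE2.
 assert (Hp0 : j 1%nat * p0 = INR (nth 0 (te t) 0%nat) * T) by (apply (E0 0 t j)).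
 assert (HS1 : S1 = T * sumF N' (fun i => INR (1 + S i) * INR (nth (S i) (te t) 0%nat))).
 { unfold S1. rewrite <- sumF_scal. apply sumF_ext. intros i _. rewrite E0. fold T. simpl (1 + S i)%nat. ring. }
 assert (HS2 : S2 = T * sumF N' (fun i => INR (nth (S i) (te t) 0%nat))).
 { unfold S2. rewrite <- sumF_scal. apply sumF_ext. intros i _. rewrite E0. fold T. ring. }
 simpl (Nat.eqb (S _) 0) in HE2.
 assert (HS1' : S1 = INR d * T - j 1%nat * p0).
 { rewrite HS1, Hp0, <- HE1. simpl (1 + 0)%nat. simpl (INR 1). ring. }
 assert (HS2' : S2 = INR s * T).
 { rewrite HS2, <- HE2. ring. }
 rewrite HS1', HS2'.
 replace (sumF N' (fun i => if Nat.eqb (S i) 0 then 0 else pd (S i) t j * W (S (S i)) j)) with S3 by reflexivity.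
 ring.
Qed.



Definition lsumT (L : dpoly) (f : term -> R) : R := fold_right (fun t acc => f t + acc) 0 L.

Lemma lsumT_ext L f g : (forall t, In t L -> f t = g t) -> lsumT L f = lsumT L g.
Proof. induction L; intros H; simpl. reflexivity. rewrite H by (left; auto). rewrite IHL; auto.
 intros; apply H; right; auto. Qed.

Lemma lsumT_plus L f g : lsumT L (fun t => f t + g t) = lsumT L f + lsumT L g.
Proof. induction L; simpl. ring. rewrite IHL. ring. Qed.

Lemma lsumT_scal L c f : lsumT L (fun t => c * f t) = c * lsumT L f.
Proof. induction L; simpl. ring. rewrite IHL. ring. Qed.

Lemma dp_eval_lsum P j : dp_eval P j = lsumT P (fun t => term_eval t j).
Proof. induction P; simpl; auto. Qed.

Lemma dpS_cons r t P j : dp_eval (dpartial (S r) (t :: P)) j = pd r t j + dp_eval (dpartial (S r) P) j.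
Proof. rewrite !dp_eval_dpartial_S. reflexivity. Qed.

Lemma LstN_lsum N P j : LstN N P j = lsumT P (fun t => LstN N [t] j).
Proof. induction P; simpl.
 - unfold LstN. rewrite sumF_zero. simpl; ring. intros; simpl; ring.
 - rewrite <- IHP. unfold LstN.
   rewrite (sumF_ext N (fun r => dp_eval (dpartial (S r) (a :: P)) j * Bp (S r) j)
      (fun r => dp_eval (dpartial (S r) [a]) j * Bp (S r) j + dp_eval (dpartial (S r) P) j * Bp (S r) j)).
   rewrite sumF_plus. simpl. ring.
   intros. rewrite !dpS_cons. simpl. ring.
Qed.

Definition Plt s (P : dpoly) := filter (fun t => Nat.ltb (gr (te t)) s) P.
Definition Peq s (P : dpoly) := filter (fun t => Nat.eqb (gr (te t)) s) P.
Definition Pgt s (P : dpoly) := filter (fun t => Nat.ltb s (gr (te t))) P.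

Lemma lsumT_split3 s L f : lsumT L f = lsumT (Plt s L) f + lsumT (Peq s L) f + lsumT (Pgt s L) f.
Proof. unfold Plt, Peq, Pgt. induction L; simpl. ring.
 destruct (Nat.ltb_spec (gr (te a)) s), (Nat.eqb_spec (gr (te a)) s), (Nat.ltb_spec s (gr (te a))); try lia;
 simpl; rewrite IHL; ring. Qed.

Lemma Plt_S s P j : dp_eval (Plt (S s) P) j = dp_eval (Plt s P) j + dp_eval (Peq s P) j.
Proof. unfold Plt, Peq. induction P; simpl. ring.
 destruct (Nat.ltb_spec (gr (te a)) (S s)), (Nat.eqb_spec (gr (te a)) s), (Nat.ltb_spec (gr (te a)) s); try lia;
 simpl; rewrite IHP; ring. Qed.

Lemma lim_pt (g : R -> R) x0 : continuity_pt g x0 -> (forall y, y <> x0 -> g y = 0) -> g x0 = 0.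
Proof. intros Hc H. destruct (Req_dec (g x0) 0) as [|Hne]; auto. exfalso.
 assert (Hp : Rabs (g x0) > 0) by (apply Rabs_pos_lt; auto).
 destruct (Hc _ Hp) as [alp [Halp Hx]].
 specialize (Hx (x0 + alp / 2)).
 assert (Hy : x0 + alp / 2 <> x0) by lra.
 rewrite (H _ Hy) in Hx. simpl in Hx. unfold R_dist in Hx.
 assert (Hd : Rabs (x0 + alp / 2 - x0) < alp).
 { replace (x0 + alp / 2 - x0) with (alp / 2) by ring. rewrite Rabs_right by lra. lra. }
 assert (Hxx : Rabs (0 - g x0) < Rabs (g x0)).
 { apply Hx. split. split. constructor. auto. exact Hd. }
 rewrite Rminus_0_l, Rabs_Ropp in Hxx. lra. Qed.

Lemma exd_cont (g : R -> R) x : ex_derive g x -> continuity_pt g x.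
Proof. intros H. apply continuity_pt_filterlim. apply (ex_derive_continuous g x H). Qed.

Lemma exd_plus (f g : R -> R) x : ex_derive f x -> ex_derive g x -> ex_derive (fun y => f y + g y) x.
Proof. intros. exact (ex_derive_plus f g x H H0). Qed.

Lemma exd_const (a x : R) : ex_derive (fun _ => a) x.
Proof. exact (ex_derive_const a x). Qed.

Lemma exd_id (x : R) : ex_derive (fun y => y) x.
Proof. exact (ex_derive_id x). Qed.

Lemma exd_poly2 (k : nat) (a b c x : R) : ex_derive (fun mu => mu ^ k * (a + mu * b + mu ^ 2 * c)) x.
Proof. apply (ex_derive_mult (fun mu => mu ^ k) (fun mu => a + mu * b + mu ^ 2 * c)).
 apply (ex_derive_pow (fun y => y)). apply exd_id.
 apply (exd_plus (fun mu => a + mu * b) (fun mu => mu ^ 2 * c)).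
 apply (exd_plus (fun _ => a) (fun mu => mu * b)). apply exd_const.
 apply (ex_derive_mult (fun mu => mu) (fun _ => b)). apply exd_id. apply exd_const.
 apply (ex_derive_mult (fun mu => mu ^ 2) (fun _ => c)). apply (ex_derive_pow (fun y => y)). apply exd_id. apply exd_const.
Qed.

Lemma exd_lsum (L : dpoly) (k : term -> nat) (a b c : term -> R) x :
  ex_derive (fun mu => lsumT L (fun t => mu ^ (k t) * (a t + mu * b t + mu ^ 2 * c t))) x.
Proof. induction L as [|t L IH].
 - apply (ex_derive_ext (fun _ => 0)). intros; reflexivity. apply exd_const.
 - apply (ex_derive_ext (fun mu => mu ^ (k t) * (a t + mu * b t + mu ^ 2 * c t)
          + lsumT L (fun t => mu ^ (k t) * (a t + mu * b t + mu ^ 2 * c t)))).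
   intros; reflexivity.
   apply (exd_plus (fun mu => mu ^ (k t) * (a t + mu * b t + mu ^ 2 * c t))
                 (fun mu => lsumT L (fun t => mu ^ (k t) * (a t + mu * b t + mu ^ 2 * c t)))).
   apply exd_poly2. exact IH. Qed.

Lemma pd_zero_of_zero P j r : (forall j', dp_eval P j' = 0) -> dp_eval (dpartial (S r) P) j = 0.
Proof. intros H. rewrite (dpartial_sd P j (S r)) by discriminate. unfold sd.
 rewrite (Derive_ext _ (fun _ => 0)) by (intros; apply H). apply Derive_const. Qed.

Lemma cont_upd1 P j : continuity_pt (fun y => dp_eval P (upd j 1 y)) (j 1%nat).
Proof. apply exd_cont. exists (dp_eval (dpartial 1 P) j). apply dp_deriv. discriminate. Qed.

Lemma filter_all (f : term -> bool) L : (forall t, In t L -> f t = true) -> filter f L = L.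
Proof. induction L; simpl; intros H; auto. rewrite H by auto. rewrite IHL; auto. Qed.

Definition maxgr (P : dpoly) : nat := fold_right (fun t m => Nat.max (gr (te t)) m) 0%nat P.

Lemma maxgr_in P t : In t P -> (gr (te t) <= maxgr P)%nat.
Proof. induction P; simpl; intros H. contradiction. destruct H; subst. lia. specialize (IHP H). lia. Qed.

Lemma nvars_in P t : In t P -> (length (te t) <= nvars P)%nat.
Proof. induction P; simpl; intros H. contradiction. destruct H; subst. lia. specialize (IHP H). lia. Qed.

Theorem core P d N : (2 <= d)%nat -> (nvars P <= N)%nat ->
  List.Forall (fun t => mono_deg (te t) 1 = d) P ->
  (forall j, LstN N P j = 0) -> forall j, dp_eval P j = 0.
Proof.
 intros Hd HN Hh HL.
 assert (HNt : forall t, In t P -> (length (te t) <= N)%nat) by (intros t Ht; pose proof (nvars_in P t Ht); lia).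
 assert (Hdt : forall t, In t P -> mono_deg (te t) 1 = d) by (rewrite Forall_forall in Hh; auto).
 assert (HN1 : (1 <= N)%nat \/ P = []).
 { destruct P as [|t P']. right; auto. left. specialize (HNt t (or_introl eq_refl)).
   specialize (Hdt t (or_introl eq_refl)). destruct (te t). simpl in Hdt. lia. simpl in HNt. lia. }
 destruct HN1 as [HN1|HP0]. 2: { subst; intros; reflexivity. }
 assert (Hclaim : forall s j, dp_eval (Plt s P) j = 0).
 { induction s as [|s IH]; intros j.
   - unfold Plt. rewrite (filter_ext_in _ (fun _ => false)). clear. induction P; simpl; auto.
     intros t _. destruct (Nat.ltb_spec (gr (te t)) 0); auto. lia.
   - rewrite Plt_S, IH, Rplus_0_l.
     assert (HA : forall j, j 1%nat * (1 - INR d - INR s) * dp_eval (Peq s P) j = 0).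
     { clear j. intros j.
       set (A := lsumT (Peq s P) (fun t => ta d t j)).
       set (Rf := fun mu => lsumT (Peq s P) (fun t => tb N t j) + mu * lsumT (Peq s P) (fun t => tcc t j)
                 + lsumT (Pgt s P) (fun t => mu ^ (gr (te t) - S s) * (ta d t j + mu * tb N t j + mu ^ 2 * tcc t j))).
       assert (Hmu : forall mu, mu ^ s * (A + mu * Rf mu) = 0).
       { intros mu. rewrite <- (HL (tau mu j)). rewrite LstN_lsum, (lsumT_split3 s).
         assert (Hlow : lsumT (Plt s P) (fun t => LstN N [t] (tau mu j)) = 0).
         { rewrite <- LstN_lsum. unfold LstN. rewrite IH.
           rewrite sumF_zero. ring. intros r _. rewrite pd_zero_of_zero. ring. auto. }
         rewrite Hlow.
         rewrite (lsumT_ext (Peq s P) _ (fun t => mu ^ s * (ta d t j + mu * tb N t j + mu ^ 2 * tcc t j))).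
         2: { intros t Ht. unfold Peq in Ht. apply filter_In in Ht. destruct Ht as [Ht Hs].
              apply Nat.eqb_eq in Hs. rewrite <- Hs. apply Lst_term_tau; auto. }
         rewrite (lsumT_ext (Pgt s P) _ (fun t => mu ^ (S s) * (mu ^ (gr (te t) - S s) * (ta d t j + mu * tb N t j + mu ^ 2 * tcc t j)))).
         2: { intros t Ht. unfold Pgt in Ht. apply filter_In in Ht. destruct Ht as [Ht Hs].
              apply Nat.ltb_lt in Hs. rewrite Lst_term_tau with (d := d) by auto.
              rewrite <- Rmult_assoc, <- pow_add. f_equal. f_equal. lia. }
         rewrite !lsumT_scal, !lsumT_plus, !lsumT_scal. unfold Rf, A. simpl. ring. }
       assert (HA0 : A + 0 * Rf 0 = 0).
       { apply (lim_pt (fun mu => A + mu * Rf mu) 0).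
         - apply exd_cont. apply (exd_plus (fun _ => A) (fun mu => mu * Rf mu)). apply exd_const.
           apply (ex_derive_mult (fun mu => mu) Rf). apply exd_id.
           unfold Rf.
           apply (exd_plus (fun mu => lsumT (Peq s P) (fun t => tb N t j) + mu * lsumT (Peq s P) (fun t => tcc t j))
              (fun mu => lsumT (Pgt s P) (fun t => mu ^ (gr (te t) - S s) * (ta d t j + mu * tb N t j + mu ^ 2 * tcc t j)))).
           apply (exd_plus (fun _ => lsumT (Peq s P) (fun t => tb N t j)) (fun mu => mu * lsumT (Peq s P) (fun t => tcc t j))).
           apply exd_const. apply (ex_derive_mult (fun mu => mu) (fun _ => lsumT (Peq s P) (fun t => tcc t j))).
           apply exd_id. apply exd_const.
           apply (exd_lsum (Pgt s P) (fun t => (gr (te t) - S s)%nat) (fun t => ta d t j) (fun t => tb N t j) (fun t => tcc t j)).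
         - intros y Hy. specialize (Hmu y). apply Rmult_integral in Hmu. destruct Hmu as [Hm|Hm]; auto.
           exfalso. apply (pow_nonzero y s Hy Hm). }
       rewrite Rmult_0_l, Rplus_0_r in HA0.
       rewrite <- HA0. unfold A. rewrite dp_eval_lsum, <- lsumT_scal. apply lsumT_ext.
       intros t Ht. unfold Peq in Ht. apply filter_In in Ht. destruct Ht as [Ht Hs].
       apply Nat.eqb_eq in Hs. unfold ta. rewrite Hs. ring. }
     assert (Hne : 1 - INR d - INR s <> 0).
     { assert (INR 2 <= INR d) by (apply le_INR; lia). pose proof (pos_INR s). simpl in H. lra. }
     assert (HB : forall j, j 1%nat <> 0 -> dp_eval (Peq s P) j = 0).
     { intros j' Hj. specialize (HA j'). apply Rmult_integral in HA. destruct HA as [HA|HA]; auto.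
       apply Rmult_integral in HA. destruct HA; contradiction. }
     destruct (Req_dec (j 1%nat) 0) as [Hj|Hj]. 2: auto.
     rewrite <- (upd_same j 1).
     apply (lim_pt (fun y => dp_eval (Peq s P) (upd j 1 y)) (j 1%nat)).
     + apply cont_upd1.
     + intros y Hy. apply HB. unfold upd. simpl. lra. }
 intros j. rewrite <- (Hclaim (S (maxgr P)) j). unfold Plt. rewrite filter_all. reflexivity.
 intros t Ht. apply Nat.ltb_lt. pose proof (maxgr_in P t Ht). lia.
Qed.



Lemma isd_ext (f g : R -> R) x l : (forall t, f t = g t) -> is_derive f x l -> is_derive g x l.
Proof. intros H. apply is_derive_ext. exact H. Qed.

Lemma beta_n_0 alpha beta x : beta_n alpha beta 0 x = beta x.
Proof. unfold beta_n. simpl. field. Qed.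

Lemma beta_deriv alpha beta n x : smooth alpha -> smooth beta ->
  is_derive (beta_n alpha beta n) x
   ((INR n * Derive alpha x * alpha x ^ Init.Nat.pred n * Derive_n beta n x + alpha x ^ n * Derive_n beta (S n) x) / INR (fact n)).
Proof. intros Ha Hb. unfold beta_n.
 apply (isd_ext (fun y => (alpha y ^ n * Derive_n beta n y) * / INR (fact n))).
 { intros; unfold Rdiv; ring. }
 apply (isd_eq _ _ _ _ (isd_mult _ _ _ _ _
   (isd_mult _ _ _ _ _ (is_derive_pow alpha n x _ (Derive_correct alpha x (Ha 0%nat x)))
                       (Derive_correct (Derive_n beta n) x (Hb n x)))
   (isd_const (/ INR (fact n)) x))).
 change (Derive_n beta (S n) x) with (Derive (Derive_n beta n) x). unfold Rdiv. ring. Qed.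

Lemma beta_diff alpha beta n x : smooth alpha -> smooth beta -> ex_derive (beta_n alpha beta n) x.
Proof. intros Ha Hb. eexists. apply beta_deriv; auto. Qed.

Lemma beta_rec_holds alpha beta : smooth alpha -> smooth beta -> beta_rec alpha (beta_n alpha beta).
Proof. intros Ha Hb n x Hn. destruct n as [|n]. lia. simpl Init.Nat.pred.
 rewrite (is_derive_unique _ _ _ (beta_deriv alpha beta n x Ha Hb)).
 unfold beta_n. rewrite fact_simpl, mult_INR.
 assert (Hf : INR (fact n) <> 0) by apply INR_fact_neq_0.
 assert (HS : INR (S n) <> 0) by apply not_0_INR, Nat.neq_succ_0.
 assert (Hp : INR n * (alpha x * alpha x ^ Init.Nat.pred n) = INR n * alpha x ^ n).
 { destruct n; simpl; ring. }
 simpl (alpha x ^ S n).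
 transitivity ((alpha x * alpha x ^ n * Derive_n beta (S n) x) / INR (fact n)).
 { field. split; auto. }
 transitivity ((alpha x * alpha x ^ n * Derive_n beta (S n) x + Derive alpha x * Derive_n beta n x * (INR n * (alpha x * alpha x ^ Init.Nat.pred n) - INR n * alpha x ^ n)) / INR (fact n)).
 { rewrite Hp. field. auto. }
 rewrite S_INR. field. auto.
Qed.



Lemma beta_unique alpha beta : smooth alpha -> smooth beta ->
  forall b : nat -> R -> R, (forall x, b O x = beta x) -> beta_rec alpha b ->
        forall n x, b n x = beta_n alpha beta n x.
Proof. intros Ha Hb b Hb0 Hrec n. induction n; intros x.
 - rewrite Hb0, beta_n_0. reflexivity.
 - assert (HS : INR (S n) <> 0) by apply not_0_INR, Nat.neq_succ_0.
   apply (Rmult_eq_reg_l (INR (S n))); auto.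
   rewrite (Hrec (S n) x) by lia. rewrite (beta_rec_holds alpha beta Ha Hb (S n) x) by lia.
   simpl Init.Nat.pred. rewrite IHn. rewrite (Derive_ext (b n) (beta_n alpha beta n)) by auto. reflexivity.
Qed.

Definition K2 (alpha : R -> R) : dpoly := [mkTerm alpha [3%nat]].

Lemma Kser_nil alpha n : n <> 0%nat -> n <> 2%nat -> Kser alpha n = [].
Proof. intros H1 H2. destruct n as [|[|[|n]]]; try lia; reflexivity. Qed.

Lemma frechet_nil_l V : frechet [] V = [].
Proof. reflexivity. Qed.

Lemma totDn_nil r : totDn r [] = [].
Proof. induction r. reflexivity. change (totDn (S r) []) with (totD (totDn r [])). rewrite IHr. reflexivity. Qed.

Lemma frechet_nil_r P j : dp_eval (frechet P []) j = 0.
Proof. rewrite frechet_eval. apply sumF_zero. intros. rewrite totDn_nil. simpl. ring. Qed.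

Lemma sfrechet_l alpha V k j : dp_eval (sfrechet (Kser alpha) V k) j =
  dp_eval (frechet K0 (V k)) j + (if Nat.leb 2 k then dp_eval (frechet (K2 alpha) (V (k - 2)%nat)) j else 0).
Proof. unfold sfrechet. rewrite dp_eval_concat_seq. unfold K0, K2.
 destruct k as [|[|k]].
 - simpl. ring.
 - simpl. ring.
 - cbn [sumF]. simpl (Nat.leb 2 (S (S k))).
   rewrite sumF_zero. 2: { intros i _. rewrite (Kser_nil alpha) by lia. rewrite frechet_nil_l. reflexivity. }
   replace (S (S k) - 2)%nat with k by lia.
   replace (S (S k) - (0 + 0))%nat with (S (S k)) by lia.
   replace (S (S k) - (0 + 2))%nat with k by lia. simpl. ring.
Qed.

Lemma sfrechet_r alpha V k j : dp_eval (sfrechet V (Kser alpha) k) j =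
  dp_eval (frechet (V k) K0) j + (if Nat.leb 2 k then dp_eval (frechet (V (k - 2)%nat) (K2 alpha)) j else 0).
Proof. unfold sfrechet. rewrite dp_eval_concat_seq.
 rewrite (sumF_ext _ _ (fun i => dp_eval (frechet (V i) (Kser alpha (k - i)%nat)) j)) by reflexivity.
 rewrite sumF_last. rewrite Nat.sub_diag.
 destruct k as [|[|k]].
 - simpl. unfold K0. ring.
 - simpl. rewrite frechet_nil_r. unfold K0. ring.
 - rewrite !sumF_last. simpl (Nat.leb 2 (S (S k))).
   replace (S (S k) - S k)%nat with 1%nat by lia. replace (S (S k) - k)%nat with 2%nat by lia.
   replace (S (S k) - 2)%nat with k by lia.
   change (Kser alpha 1%nat) with (@nil term). change (Kser alpha 2%nat) with (K2 alpha). rewrite frechet_nil_r.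
   change (Kser alpha 0%nat) with K0.
   rewrite sumF_zero. ring. intros i Hi. rewrite (Kser_nil alpha) by lia. apply frechet_nil_r.
Qed.

Lemma Qbeta_even alpha beta (n : nat) : Qbeta alpha beta (2 * n)%nat = [mkTerm (beta_n alpha beta n) [S (2 * n)]].
Proof. unfold Qbeta. rewrite Nat.even_even, Nat.div2_double. reflexivity. Qed.

Lemma Qbeta_odd alpha beta (n : nat) : Qbeta alpha beta (2 * n + 1)%nat = [].
Proof. unfold Qbeta. rewrite Nat.even_odd. reflexivity. Qed.

Lemma Lst_single f m j : (1 <= m)%nat -> LstN 1 [mkTerm f [m]] j = (1 - INR m) * f (j 0%nat) * (j 1%nat * (j 1%nat * j 1%nat ^ Init.Nat.pred m)).
Proof. intros Hm. unfold LstN. cbn [sumF]. unfold Bp, Bf. simpl. unfold term_eval. simpl.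
 replace (j 1%nat ^ m) with (j 1%nat * j 1%nat ^ Init.Nat.pred m) by (destruct m; [lia|reflexivity]). ring. Qed.

Lemma Mpart alpha f m j : (1 <= m)%nat ->
  dp_eval (frechet (K2 alpha) [mkTerm f [m]]) j - dp_eval (frechet [mkTerm f [m]] (K2 alpha)) j
  = ((1 - INR m) * Derive alpha (j 0%nat) * f (j 0%nat) + 2 * alpha (j 0%nat) * Derive f (j 0%nat)) * (j 1%nat ^ 3 * (j 1%nat * j 1%nat ^ Init.Nat.pred m)).
Proof. intros Hm. rewrite !frechet_eval. simpl. unfold term_eval. simpl.
 replace (j 1%nat ^ m) with (j 1%nat * j 1%nat ^ Init.Nat.pred m) by (destruct m; [lia|reflexivity]). ring. Qed.



Lemma sym_expand alpha (V : series) k j : (2 <= k)%nat ->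
  dp_eval (dp_sub (sfrechet (Kser alpha) V k) (sfrechet V (Kser alpha) k)) j
  = LstN (nvars (V k)) (V k) j + (dp_eval (frechet (K2 alpha) (V (k - 2)%nat)) j - dp_eval (frechet (V (k - 2)%nat) (K2 alpha)) j).
Proof. intros Hk. rewrite dp_eval_sub, sfrechet_l, sfrechet_r, <- Lst_frechet.
 replace (Nat.leb 2 k) with true by (symmetry; apply Nat.leb_le; lia). ring. Qed.

Theorem existence alpha beta : smooth alpha -> smooth beta -> formal_symmetry (Kser alpha) (Qbeta alpha beta).
Proof. intros Ha Hb k j. change (dp_eval [] j) with 0.
 destruct (Nat.Even_or_Odd k) as [[n Hn]|[n Hn]]; subst k.
 - destruct n as [|n'].
   + simpl (2 * 0)%nat. rewrite dp_eval_sub, sfrechet_l, sfrechet_r. simpl (Nat.leb 2 0).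
     change 0%nat with (2 * 0)%nat. rewrite Qbeta_even.
     assert (HL := Lst_frechet [mkTerm (beta_n alpha beta 0) [S (2 * 0)]] j).
     simpl (nvars _) in HL. rewrite Lst_single in HL by lia.
     simpl (INR (S (2 * 0))) in HL. lra.
   + rewrite sym_expand by lia.
     replace (2 * S n' - 2)%nat with (2 * n')%nat by lia. rewrite !Qbeta_even.
     simpl (nvars _). rewrite Lst_single by lia. rewrite Mpart by lia.
     rewrite !Nat.pred_succ.
     assert (Hrec := beta_rec_holds alpha beta Ha Hb (S n') (j 0%nat)). simpl (Init.Nat.pred (S n')) in Hrec.
     specialize (Hrec ltac:(lia)).
     assert (Hp : j 1%nat * (j 1%nat * j 1%nat ^ (2 * S n')) = j 1%nat ^ 3 * (j 1%nat * j 1%nat ^ (2 * n'))).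
     { replace (2 * S n')%nat with (2 + 2 * n')%nat by lia. rewrite pow_add. ring. }
     rewrite Hp.
     rewrite !S_INR, !mult_INR, !S_INR in *. simpl (INR 2). simpl (INR 0) in *.
     set (X := j 1%nat ^ 3 * (j 1%nat * j 1%nat ^ (2 * n'))).
     set (b1 := beta_n alpha beta (S n') (j 0%nat)) in *.
     set (b0 := beta_n alpha beta n' (j 0%nat)) in *.
     set (db0 := Derive (beta_n alpha beta n') (j 0%nat)) in *.
     set (da := Derive alpha (j 0%nat)) in *.
     set (a := alpha (j 0%nat)) in *.
     transitivity (-2 * ((INR n' + 1) * b1 - ((1 - (INR n' + 1)) * da * b0 + a * db0)) * X).
     ring. rewrite Hrec. ring.
 - rewrite dp_eval_sub, sfrechet_l, sfrechet_r. rewrite Qbeta_odd.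
   rewrite frechet_nil_r, frechet_nil_l. simpl (dp_eval [] j).
   destruct (Nat.leb 2 (2 * n + 1)) eqn:E.
   + apply Nat.leb_le in E. replace (2 * n + 1 - 2)%nat with (2 * (n - 1) + 1)%nat by lia.
     rewrite Qbeta_odd, frechet_nil_r, frechet_nil_l. simpl. ring.
   + ring.
Qed.

Lemma diffc_smooth P : dp_smooth P -> diffc P.
Proof. unfold dp_smooth, diffc. apply Forall_impl. intros t H x. exact (H 0%nat x). Qed.

Lemma diffc_Qbeta alpha beta k : smooth alpha -> smooth beta -> diffc (Qbeta alpha beta k).
Proof. intros Ha Hb. unfold Qbeta. destruct (Nat.even k); constructor.
 intros; apply beta_diff; auto. constructor. Qed.

Theorem uniq alpha beta : smooth alpha -> smooth beta ->
  forall Q : series,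
        (forall k, dp_smooth (Q k)) ->
        (forall n, dp_homog (2 * n + 1) (Q (2 * n)%nat)) ->
        (forall n, dp_eq (Q (2 * n + 1)%nat) nil) ->
        dp_eq (Q O) [mkTerm beta [1%nat]] ->
        formal_symmetry (Kser alpha) Q ->
        forall k, dp_eq (Q k) (Qbeta alpha beta k).
Proof. intros Ha Hb Q Hs Hh Hodd H0 Hsym.
 assert (Hex := existence alpha beta Ha Hb).
 intros k. induction k as [k IH] using lt_wf_ind.
 destruct (Nat.Even_or_Odd k) as [[n Hn]|[n Hn]]; subst k.
 - destruct n as [|n'].
   + intros j. change (2 * 0)%nat with 0%nat. rewrite (H0 j).
     change 0%nat with (2 * 0)%nat at 2. rewrite Qbeta_even. simpl. unfold term_eval. simpl.
     rewrite beta_n_0. ring.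
   + assert (IH2 : dp_eq (Q (2 * S n' - 2)%nat) (Qbeta alpha beta (2 * S n' - 2)%nat)) by (apply IH; lia).
     assert (HL : forall j, LstN (nvars (Q (2 * S n')%nat)) (Q (2 * S n')%nat) j
                  = LstN (nvars (Qbeta alpha beta (2 * S n')%nat)) (Qbeta alpha beta (2 * S n')%nat) j).
     { intros j. specialize (Hsym (2 * S n')%nat j). specialize (Hex (2 * S n')%nat j).
       rewrite sym_expand in Hsym, Hex by lia. change (dp_eval [] j) with 0 in Hsym, Hex.
       rewrite (frechet_compat_r (K2 alpha) _ _ (le_n 1) (diffc_smooth _ (Hs _)) (diffc_Qbeta alpha beta _ Ha Hb) IH2 j) in Hsym.
       rewrite (frechet_compat_l _ _ (K2 alpha) (diffc_smooth _ (Hs _)) (diffc_Qbeta alpha beta _ Ha Hb) IH2 j) in Hsym.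
       lra. }
     set (N := Nat.max (nvars (Q (2 * S n')%nat)) (nvars (Qbeta alpha beta (2 * S n')%nat))).
     assert (Hc := core (dp_sub (Q (2 * S n')%nat) (Qbeta alpha beta (2 * S n')%nat)) (2 * S n' + 1) N).
     intros j. 
     assert (Hz : dp_eval (dp_sub (Q (2 * S n')%nat) (Qbeta alpha beta (2 * S n')%nat)) j = 0).
     { apply Hc.
       - lia.
       - rewrite nvars_sub. unfold N. lia.
       - unfold dp_sub, dp_add. apply Forall_app. split. apply Hh.
         rewrite Qbeta_even. simpl. constructor. simpl. lia. constructor.
       - intros j'. rewrite LstN_sub. rewrite (LstN_extend N (Q (2 * S n')%nat)) by (unfold N; lia).
         rewrite (LstN_extend N (Qbeta alpha beta (2 * S n')%nat)) by (unfold N; lia). rewrite HL. ring. }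
     rewrite dp_eval_sub in Hz. lra.
 - intros j. rewrite Qbeta_odd. rewrite (Hodd n j). reflexivity.
Qed.

Theorem mainTheorem6 (alpha beta : R -> R) (Halpha : smooth alpha) (Hbeta : smooth beta) :
  (* Q_beta is a formal symmetry of u_t = u u_x + hbar^2 alpha(u) u_x^3 *)
  formal_symmetry (Kser alpha) (Qbeta alpha beta)
  (* the coefficients beta_n start at beta and solve the recursion ... *)
  /\ (forall x, beta_n alpha beta 0 x = beta x)
  /\ beta_rec alpha (beta_n alpha beta)
  (* ... and are its unique solution *)
  /\ (forall b : nat -> R -> R, (forall x, b O x = beta x) -> beta_rec alpha b ->
        forall n x, b n x = beta_n alpha beta n x)
  (* uniqueness among formal symmetries sum hbar^(2n) Q_(2n+1), Q_(2n+1) in D_(2n+1), Q_1 = beta(u) u_x *)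
  /\ (forall Q : series,
        (forall k, dp_smooth (Q k)) ->
        (forall n, dp_homog (2 * n + 1) (Q (2 * n)%nat)) ->
        (forall n, dp_eq (Q (2 * n + 1)%nat) nil) ->
        dp_eq (Q O) [mkTerm beta [1%nat]] ->
        formal_symmetry (Kser alpha) Q ->
        forall k, dp_eq (Q k) (Qbeta alpha beta k)).
Proof.
 split. apply existence; auto.
 split. apply beta_n_0.
 split. apply beta_rec_holds; auto.
 split. apply beta_unique; auto.
 apply uniq; auto.
Qed.
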